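(* Let $\beta>1$, $l\in(-1,0]$, $r=l+1$, let $T$ be the $(-\beta,l)$-transformation and $d$ the $(-\beta,l)$-expansion, and put $d^*(l)=\lim_{\varepsilon\to0+}d(l+\varepsilon)$ and $d^*(r)=\lim_{\varepsilon\to0+}d(r-\varepsilon)$. If $T^q(l)\neq l$ for all $q\in\mathbb{N}$, or if the equality $T^q(l)=l$ holds only for even $q\in\mathbb{N}$, then $d^*(l)=d(l)$. If on the other hand $T^q(l)=l$ for some odd $q\in\mathbb{N}$, so that $d(l)=(l_1l_2\cdots l_{q-1}l_q)^\omega$, then $$d^*(l)=l_1l_2\cdots l_{q-1}(l_q-1)\,d^*(r).$$
   Context: For $\beta>1$ and $l\in(-1,0]$, $r=l+1$, the $(-\beta,l)$-transformation is $T:[l,r)\to[l,r)$, $T(x)=-\beta x-\lfloor -\beta x-l\rfloor$. The $(-\beta,l)$-expansion of $x\in[l,r)$ is the integer sequence $d(x)=x_1x_2x_3\cdots$ with $x_i=\lfloor -\beta T^{i-1}(x)-l\rfloor$. Limits of sequences are in the product topology (digits lie in a finite set); these one-sided limits exist. $w^\omega$ is the infinite repetition of the word $w$; juxtaposition denotes concatenation. *)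

(* Defs.v *)
From Stdlib Require Import Reals ZArith Arith Lia Lra.
Open Scope R_scope.

(* floor on R: Int_part r = up r - 1, where up r is the unique integer
   with r < up r <= r + 1; hence Int_part r = floor r. *)
Definition floorR (x : R) : Z := Int_part x.

Definition Tmap (beta l : R) (x : R) : R :=
  - beta * x - IZR (floorR (- beta * x - l)).

Definition Titer (beta l : R) (n : nat) (x : R) : R :=
  Nat.iter n (Tmap beta l) x.

(* (-beta,l)-expansion, 0-indexed: dexp beta l x n = x_{n+1}
   = floor(-beta T^n(x) - l). *)
Definition dexp (beta l : R) (x : R) (n : nat) : Z :=
  floorR (- beta * Titer beta l n x - l).

(* Limit in the product topology (digits in a finite/discrete set):
   s = lim_{eps -> 0+} d(x0 + eps)  iff every coordinate is eventually
   equal to the corresponding coordinate of s. *)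
Definition is_right_lim_d (beta l x0 : R) (s : nat -> Z) : Prop :=
  forall n : nat, exists delta : R, 0 < delta /\
    forall eps : R, 0 < eps < delta -> dexp beta l (x0 + eps) n = s n.

Definition is_left_lim_d (beta l x0 : R) (s : nat -> Z) : Prop :=
  forall n : nat, exists delta : R, 0 < delta /\
    forall eps : R, 0 < eps < delta -> dexp beta l (x0 - eps) n = s n.

(* Main.v *)
Require Import Defs.
From Stdlib Require Import Reals ZArith Arith Lia Lra.
Open Scope R_scope.

Definition pos (st : R * bool) (e : R) : R :=
  if snd st then fst st + e else fst st - e.

Definition digit (beta l : R) (st : R * bool) : Z :=
  let (w, s) := st in
  if s then (if Req_EM_T (Tmap beta l w) l then (floorR (- beta * w - l) - 1)%Z
             else floorR (- beta * w - l))
  else floorR (- beta * w - l).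

Definition next (beta l : R) (st : R * bool) : R * bool :=
  let (w, s) := st in
  if s then (if Req_EM_T (Tmap beta l w) l then (l + 1, false) else (Tmap beta l w, false))
  else (Tmap beta l w, true).

Definition state (beta l : R) (n : nat) (st : R * bool) := Nat.iter n (next beta l) st.

Lemma floor_char (y : R) (k : Z) : IZR k <= y < IZR k + 1 -> floorR y = k.
Proof.
  intros [H1 H2]. unfold floorR. destruct (base_Int_part y) as [B1 B2].
  set (I := Int_part y) in *.
  assert (A1 : IZR k < IZR (I + 1)) by (rewrite plus_IZR; lra).
  assert (A2 : IZR I < IZR (k + 1)) by (rewrite plus_IZR; lra).
  apply lt_IZR in A1. apply lt_IZR in A2. lia.
Qed.

Lemma mul_lt (beta a eta : R) : 0 < beta -> eta < a / beta -> beta * eta < a.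
Proof.
  intros Hb H. apply Rmult_lt_compat_l with (r := beta) in H; [|lra].
  replace (beta * (a / beta)) with a in H by (field; lra). exact H.
Qed.

Lemma local_floor (beta l : R) (Hb : 1 < beta) (st : R * bool) :
  exists d, 0 < d /\ forall eta, 0 < eta < d ->
    floorR (- beta * pos st eta - l) = digit beta l st.
Proof.
  destruct st as [w s]. unfold pos, digit; simpl.
  destruct (base_Int_part (- beta * w - l)) as [B1 B2].
  fold (floorR (- beta * w - l)) in B1, B2.
  set (k := floorR (- beta * w - l)) in *.
  destruct s.
  - destruct (Req_EM_T (Tmap beta l w) l) as [E|E].
    + unfold Tmap in E. fold k in E.
      exists (1 / beta). split. { apply Rdiv_lt_0_compat; lra. }
      intros eta [H1 H2]. apply floor_char.
      pose proof (mul_lt beta 1 eta ltac:(lra) H2).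
      assert (0 < beta * eta) by (apply Rmult_lt_0_compat; lra).
      rewrite minus_IZR. lra.
    + assert (Hlt : IZR k < - beta * w - l).
      { destruct (Rle_lt_or_eq_dec _ _ B1) as [h|h]; [exact h|].
        exfalso. apply E. unfold Tmap. fold k. lra. }
      exists ((- beta * w - l - IZR k) / beta). split.
      { apply Rdiv_lt_0_compat; lra. }
      intros eta [H1 H2]. apply floor_char.
      pose proof (mul_lt beta _ eta ltac:(lra) H2).
      assert (0 < beta * eta) by (apply Rmult_lt_0_compat; lra). lra.
  - exists ((IZR k + 1 - (- beta * w - l)) / beta). split.
    { apply Rdiv_lt_0_compat; lra. }
    intros eta [H1 H2]. apply floor_char.
    pose proof (mul_lt beta _ eta ltac:(lra) H2).
    assert (0 < beta * eta) by (apply Rmult_lt_0_compat; lra). lra.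
Qed.

Lemma Tmap_eq beta l x k : floorR (- beta * x - l) = k -> Tmap beta l x = - beta * x - IZR k.
Proof. intros H. unfold Tmap. rewrite H. reflexivity. Qed.

Lemma step beta l st eta :
  floorR (- beta * pos st eta - l) = digit beta l st ->
  Tmap beta l (pos st eta) = pos (next beta l st) (beta * eta).
Proof.
  intros H. rewrite (Tmap_eq _ _ _ _ H). clear H.
  destruct st as [w [|]]; unfold digit, next, pos; simpl.
  - destruct (Req_EM_T (Tmap beta l w) l) as [E|E]; simpl.
    + unfold Tmap in E. rewrite minus_IZR. lra.
    + unfold Tmap. lra.
  - unfold Tmap. lra.
Qed.

Lemma iter_pos beta l (Hb : 1 < beta) n st :
  exists d, 0 < d /\ forall e, 0 < e < d ->
    Titer beta l n (pos st e) = pos (state beta l n st) (beta ^ n * e).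
Proof.
  induction n as [|n IH].
  - exists 1. split; [lra|]. intros e _. simpl.
    destruct st as [w [|]]; unfold pos; simpl; ring.
  - destruct IH as [d1 [Hd1 IH]].
    destruct (local_floor beta l Hb (state beta l n st)) as [d2 [Hd2 L]].
    assert (Hp : 0 < beta ^ n) by (apply pow_lt; lra).
    exists (Rmin d1 (d2 / beta ^ n)). split.
    { apply Rmin_pos; [lra| apply Rdiv_lt_0_compat; lra]. }
    intros e [He1 He2].
    pose proof (Rmin_l d1 (d2 / beta ^ n)). pose proof (Rmin_r d1 (d2 / beta ^ n)).
    change (Titer beta l (S n) (pos st e)) with (Tmap beta l (Titer beta l n (pos st e))).
    rewrite IH by lra.
    assert (Hm : beta ^ n * e < d2) by (apply mul_lt; lra).
    assert (0 < beta ^ n * e) by (apply Rmult_lt_0_compat; lra).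
    rewrite step by (apply L; lra).
    change (state beta l (S n) st) with (next beta l (state beta l n st)).
    f_equal. simpl. ring.
Qed.

Lemma dexp_lim beta l (Hb : 1 < beta) n st :
  exists d, 0 < d /\ forall e, 0 < e < d ->
    dexp beta l (pos st e) n = digit beta l (state beta l n st).
Proof.
  destruct (iter_pos beta l Hb n st) as [d1 [Hd1 IH]].
  destruct (local_floor beta l Hb (state beta l n st)) as [d2 [Hd2 L]].
  assert (Hp : 0 < beta ^ n) by (apply pow_lt; lra).
  exists (Rmin d1 (d2 / beta ^ n)). split.
  { apply Rmin_pos; [lra| apply Rdiv_lt_0_compat; lra]. }
  intros e [He1 He2].
  pose proof (Rmin_l d1 (d2 / beta ^ n)). pose proof (Rmin_r d1 (d2 / beta ^ n)).
  unfold dexp. rewrite IH by lra.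
  assert (Hm : beta ^ n * e < d2) by (apply mul_lt; lra).
  assert (0 < beta ^ n * e) by (apply Rmult_lt_0_compat; lra).
  apply L; lra.
Qed.

Lemma state_noj beta l N :
  (forall k, (k < N)%nat -> Nat.even k = true -> Titer beta l (S k) l <> l) ->
  forall n, (n <= N)%nat -> state beta l n (l, true) = (Titer beta l n l, Nat.even n).
Proof.
  intros H n. induction n as [|n IH]; intros Hn.
  - reflexivity.
  - change (state beta l (S n) (l, true)) with (next beta l (state beta l n (l, true))).
    rewrite IH by lia. unfold next.
    rewrite Nat.even_succ, <- Nat.negb_even.
    destruct (Nat.even n) eqn:Hev; simpl.
    + destruct (Req_EM_T (Tmap beta l (Titer beta l n l)) l) as [E|E].
      * exfalso. apply (H n ltac:(lia) Hev). exact E.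
      * reflexivity.
    + reflexivity.
Qed.

Lemma digit_noj beta l n :
  (Nat.even n = true -> Titer beta l (S n) l <> l) ->
  digit beta l (Titer beta l n l, Nat.even n) = dexp beta l l n.
Proof.
  intros H. unfold digit. destruct (Nat.even n) eqn:Hev.
  - destruct (Req_EM_T (Tmap beta l (Titer beta l n l)) l) as [E|E].
    + exfalso. apply (H eq_refl). exact E.
    + reflexivity.
  - reflexivity.
Qed.

Theorem mainTheorem5 (beta l : R) (Hbeta : 1 < beta) (Hl : -1 < l <= 0) :
  (* Case 1: T^q(l) <> l for all q >= 1, or T^q(l) = l only for even q *)
  ((forall q : nat, (1 <= q)%nat -> Titer beta l q l <> l) \/
   (forall q : nat, (1 <= q)%nat -> Titer beta l q l = l -> Nat.Even q) ->
   is_right_lim_d beta l l (dexp beta l l))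
  /\
  (* Case 2: q is the (least) period of l, and q is odd:
     d*(l) = l_1 ... l_{q-1} (l_q - 1) d*(r) *)
  (forall q : nat, (1 <= q)%nat -> Nat.Odd q ->
   Titer beta l q l = l ->
   (forall k : nat, (1 <= k < q)%nat -> Titer beta l k l <> l) ->
   exists sr : nat -> Z,
     is_left_lim_d beta l (l + 1) sr /\
     is_right_lim_d beta l l
       (fun n => if (n <? q - 1)%nat then dexp beta l l n
                 else if (n =? q - 1)%nat then (dexp beta l l n - 1)%Z
                 else sr (n - q)%nat)).
Proof.
  split.
  - intros Hc.
    assert (Hk : forall k, Nat.even k = true -> Titer beta l (S k) l <> l).
    { intros k Hev E. destruct Hc as [Hc|Hc].
      - exact (Hc (S k) ltac:(lia) E).
      - pose proof (Hc (S k) ltac:(lia) E) as [m Hm].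
        apply Nat.even_spec in Hev. destruct Hev as [m' Hm']. lia. }
    intros n. destruct (dexp_lim beta l Hbeta n (l, true)) as [d [Hd L]].
    exists d. split; [exact Hd|]. intros e He.
    change (l + e) with (pos (l, true) e). rewrite L by exact He.
    rewrite (state_noj beta l n (fun k _ Hev => Hk k Hev) n (le_n n)).
    apply digit_noj. apply Hk.
  - intros q Hq Hodd Hper Hmin.
    destruct Hodd as [m Hm].
    exists (fun n => digit beta l (state beta l n (l + 1, false))). split.
    + intros n. destruct (dexp_lim beta l Hbeta n (l + 1, false)) as [d [Hd L]].
      exists d. split; [exact Hd|]. intros e He.
      change (l + 1 - e) with (pos (l + 1, false) e). apply L; exact He.
    + assert (HN : forall k, (k < q - 1)%nat -> Nat.even k = true -> Titer beta l (S k) l <> l).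
      { intros k Hk _. apply Hmin. lia. }
      assert (Hev : Nat.even (q - 1) = true).
      { apply Nat.even_spec. exists m. lia. }
      assert (Hs : state beta l (q - 1) (l, true) = (Titer beta l (q - 1) l, true)).
      { rewrite (state_noj beta l (q - 1) HN (q - 1) (le_n _)). rewrite Hev. reflexivity. }
      assert (HT : Tmap beta l (Titer beta l (q - 1) l) = l).
      { change (Tmap beta l (Titer beta l (q - 1) l)) with (Titer beta l (S (q - 1)) l).
        replace (S (q - 1)) with q by lia. exact Hper. }
      assert (Hsq : state beta l q (l, true) = (l + 1, false)).
      { replace q with (S (q - 1)) at 1 by lia.
        change (state beta l (S (q - 1)) (l, true)) with (next beta l (state beta l (q - 1) (l, true))).
        rewrite Hs. unfold next.
        destruct (Req_EM_T (Tmap beta l (Titer beta l (q - 1) l)) l) as [E|E].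
        - reflexivity.
        - contradiction. }
      intros n. destruct (dexp_lim beta l Hbeta n (l, true)) as [d [Hd L]].
      exists d. split; [exact Hd|]. intros e He.
      change (l + e) with (pos (l, true) e). rewrite L by exact He.
      destruct (Nat.ltb_spec n (q - 1)) as [H1|H1].
      * rewrite (state_noj beta l (q - 1) HN n ltac:(lia)).
        apply digit_noj. intros _. apply Hmin. lia.
      * destruct (Nat.eqb_spec n (q - 1)) as [H2|H2].
        -- subst n. rewrite Hs. unfold digit.
           destruct (Req_EM_T (Tmap beta l (Titer beta l (q - 1) l)) l) as [E|E].
           ++ reflexivity.
           ++ contradiction.
        -- unfold state. replace n with ((n - q) + q)%nat by lia.
           rewrite Nat.iter_add. fold (state beta l q (l, true)). rewrite Hsq.
           replace ((n - q + q) - q)%nat with (n - q)%nat by lia. reflexivity.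
Qed.
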